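(* Let $G$ be a graph and let $K$ be a cut-set of the complement $\overline{G}$. Then \[\chi(G) \leq \frac{1}{2} \left(\omega(G) + \Delta(G) + 1 \right) + \frac{4\chi(G[K]) + \alpha(G[K]) + 3 - \alpha(G)}{4}.\]
   Context: All graphs are finite and simple with non-empty vertex set. $\chi$ is the chromatic number, $\omega$ the clique number, $\Delta$ the maximum degree, $\alpha$ the independence number. $\overline{G}$ is the complement of $G$. A cut-set of $\overline{G}$ is a set $K$ of vertices such that $\overline{G}-K$ is disconnected; $G[K]$ is the subgraph of $G$ induced by $K$. By convention the graph on the empty vertex set has chromatic number $0$ and independence number $0$. *)

(* Defs.v *)
(* A simple graph is a symmetric irreflexive relation e on a finType T. *)
From mathcomp Require Import all_boot all_order all_algebra.
Set Implicit Arguments. Unset Strict Implicit. Unset Printing Implicit Defensive.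

Section Graphs.
Variables (T : finType) (e : rel T).

Definition clique (A : {set T}) : bool :=
  [forall x in A, forall y in A, (x != y) ==> e x y].

Definition stable (A : {set T}) : bool :=
  [forall x in A, forall y in A, ~~ e x y].

(* chromatic number of G[A]: least number of stable blocks partitioning A
   (0 when A is empty; #|A| is attained by the singleton partition) *)
Definition chi_on (A : {set T}) : nat :=
  \big[minn/#|A|]_(P : {set {set T}} | partition P A && [forall B in P, stable B]) #|P|.

Definition alpha_on (A : {set T}) : nat :=
  \max_(B : {set T} | (B \subset A) && stable B) #|B|.

Definition chi : nat := chi_on setT.
Definition alpha : nat := alpha_on setT.

Definition omega : nat := \max_(B : {set T} | clique B) #|B|.

Definition Delta : nat := \max_(x : T) #|[set y | e x y]|.

Definition compl_rel : rel T := [rel x y | (x != y) && ~~ e x y].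

(* K is a cut-set of the complement: complement minus K is disconnected,
   i.e. has two vertices not joined by a path inside V \ K *)
Definition compl_cutset (K : {set T}) : Prop :=
  exists u v, [/\ u \notin K, v \notin K &
    ~~ connect [rel x y | [&& x \notin K, y \notin K & compl_rel x y]] u v].

End Graphs.

(* Main.v *)
Require Import Defs.
From mathcomp Require Import all_boot all_order all_algebra.
From mathcomp Require Import zify.
Set Implicit Arguments. Unset Strict Implicit. Unset Printing Implicit Defensive.

Lemma bigminn_le_seq (I : eqType) (r : seq I) (P : pred I) F x0 j :
  j \in r -> P j -> \big[minn/x0]_(i <- r | P i) F i <= F j.
Proof.
elim: r => [|i r IH] //=; rewrite inE big_cons => /orP [/eqP <-|jr] Pj.
  by rewrite Pj geq_minl.
case: (P i); last exact: IH.
by rewrite geq_min IH ?orbT.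
Qed.
Lemma bigminn_le (I : finType) (P : pred I) F x0 j :
  P j -> \big[minn/x0]_(i | P i) F i <= F j.
Proof. by move=> Pj; apply: bigminn_le_seq => //; rewrite mem_index_enum. Qed.

Lemma cardsU_le (T0 : finType) (A B : {set T0}) : #|A :|: B| <= #|A| + #|B|.
Proof. by rewrite cardsU leq_subr. Qed.

Section G.
Variables (T : finType) (e : rel T).
Hypothesis e_sym : symmetric e.
Hypothesis e_irr : irreflexive e.

Definition omega_on (X : {set T}) := \max_(B : {set T} | (B \subset X) && clique e B) #|B|.
Definition Delta_on (X : {set T}) := \max_(x in X) #|[set y in X | e x y]|.
Definition proper (C : finType) (X : {set T}) (f : T -> C) :=
  forall x y, x \in X -> y \in X -> e x y -> f x != f y.

Lemma stableP (B : {set T}) : reflect (forall x y, x \in B -> y \in B -> ~~ e x y) (stable e B).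
Proof.
apply: (iffP forall_inP) => [H x y xB yB|H x xB]; last by apply/forall_inP => y yB; exact: H.
by move/forall_inP: (H x xB); apply.
Qed.

Lemma cliqueP (B : {set T}) : reflect (forall x y, x \in B -> y \in B -> x != y -> e x y) (clique e B).
Proof.
apply: (iffP forall_inP) => [H x y xB yB|H x xB]; last first.
  by apply/forall_inP => y yB; apply/implyP; exact: H.
by move/forall_inP: (H x xB) => /(_ y yB) /implyP.
Qed.

Lemma alpha_ge (X B : {set T}) : B \subset X -> stable e B -> #|B| <= alpha_on e X.
Proof. by move=> sBX sB; rewrite /alpha_on; apply: leq_bigmax_cond; rewrite sBX. Qed.

Lemma alpha_ex (X : {set T}) : exists2 B : {set T}, (B \subset X) && stable e B & #|B| = alpha_on e X.
Proof.
rewrite /alpha_on.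
have : 0 < #|[pred B : {set T} | (B \subset X) && stable e B]|.
  apply/card_gt0P; exists set0; rewrite inE sub0set /=; apply/stableP => x y; by rewrite inE.
move/(eq_bigmax_cond (fun B : {set T} => #|B|)) => [B HB ->]; by exists B.
Qed.

Lemma omega_ge (X B : {set T}) : B \subset X -> clique e B -> #|B| <= omega_on X.
Proof. by move=> sBX sB; rewrite /omega_on; apply: leq_bigmax_cond; rewrite sBX. Qed.

Lemma omega_mono (X Y : {set T}) : X \subset Y -> omega_on X <= omega_on Y.
Proof.
move=> sXY; apply/bigmax_leqP => B /andP [sBX cB]; apply: omega_ge => //; exact: subset_trans sXY.
Qed.

Lemma Delta_ge (X : {set T}) x : x \in X -> #|[set y in X | e x y]| <= Delta_on X.
Proof. by move=> xX; rewrite /Delta_on; apply: leq_bigmax_cond. Qed.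

Lemma Delta_le (X : {set T}) d : (forall x, x \in X -> #|[set y in X | e x y]| <= d) -> Delta_on X <= d.
Proof. by move=> H; apply/bigmax_leqP. Qed.

Lemma Delta_ex (X : {set T}) : X != set0 -> exists2 x, x \in X & #|[set y in X | e x y]| = Delta_on X.
Proof.
move=> /set0Pn [x0 x0X]; rewrite /Delta_on.
have : 0 < #|X| by apply/card_gt0P; exists x0.
move/(eq_bigmax_cond (fun x => #|[set y in X | e x y]|)) => [x xX ->]; by exists x.
Qed.

Lemma chi_col (C : finType) (X : {set T}) (f : T -> C) : proper X f -> chi_on e X <= #|f @: X|.
Proof.
move=> pf.
set P := preim_partition f X.
have hP : partition P X by apply: preim_partitionP.
have sP : [forall B in P, stable e B].
  apply/forall_inP => B /imsetP [x xX ->]; apply/stableP => y z.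
  rewrite !inE => /andP [yX /eqP fy] /andP [zX /eqP fz]; apply/negP => eyz.
  by move: (pf y z yX zX eyz); rewrite -fy -fz eqxx.
apply: leq_trans (bigminn_le _ _ (j := P) _) _; first by rewrite hP sP.
have -> : P = (fun c => [set y in X | c == f y]) @: (f @: X).
  by rewrite -imset_comp.
exact: leq_imset_card.
Qed.

Lemma chi_ex (X : {set T}) : exists2 f : T -> {set T}, proper X f & #|f @: X| = chi_on e X.
Proof.
suff [f pf le] : exists2 f : T -> {set T}, proper X f & #|f @: X| <= chi_on e X.
  by exists f => //; apply/eqP; rewrite eqn_leq le chi_col.
rewrite /chi_on.
apply: (big_ind (fun m => exists2 f : T -> {set T}, proper X f & #|f @: X| <= m)).
- exists (fun x => [set x]); last exact: leq_imset_card.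
  move=> x y _ _ exy; apply/negP => /eqP/set1_inj exy'; by rewrite exy' e_irr in exy.
- move=> m1 m2 [f1 p1 l1] [f2 p2 l2]; case: (leqP m1 m2) => h.
    by exists f1 => //; rewrite (minn_idPl h).
  by exists f2 => //; rewrite (minn_idPr (ltnW h)).
- move=> P /andP [hP sP]; exists (pblock P).
    move=> x y xX yX exy; apply/negP => /eqP eq.
    have xB : x \in pblock P x by rewrite mem_pblock (cover_partition hP).
    have yB : y \in pblock P x by rewrite eq mem_pblock (cover_partition hP).
    have PB : pblock P x \in P by rewrite pblock_mem // (cover_partition hP).
    by move/forall_inP: sP => /(_ _ PB) /stableP /(_ x y xB yB); rewrite exy.
  apply: leq_trans (subset_leq_card _) _; last exact: leqnn.
  apply/subsetP => B /imsetP [x xX ->]; rewrite pblock_mem // (cover_partition hP) //.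
Qed.



Lemma chi_union (X Y : {set T}) : chi_on e (X :|: Y) <= chi_on e X + chi_on e Y.
Proof.
have [fX pX cX] := chi_ex X; have [fY pY cY] := chi_ex Y.
pose g z := if z \in X then inl (fX z) else @inr {set T} {set T} (fY z).
have pg : proper (X :|: Y) g.
  move=> x y; rewrite !inE /g => /orP hx /orP hy exy.
  case: ifP => xX; case: ifP => yX //.
  - by have := pX x y xX yX exy; apply: contra => /eqP [->].
  - case: hx; first by rewrite xX. case: hy; first by rewrite yX.
    by move=> yY xY; have := pY x y xY yY exy; apply: contra => /eqP [->].
apply: leq_trans (chi_col pg) _; rewrite -cX -cY.
have sub : g @: (X :|: Y) \subset (inl @: (fX @: X)) :|: (inr @: (fY @: Y)).
  apply/subsetP => c /imsetP [z]; rewrite inE /g => /orP hz ->.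
  case: ifP => zX; rewrite inE; first by rewrite imset_f // imset_f.
  by case: hz; rewrite ?zX // => zY; rewrite orbC imset_f // imset_f.
apply: leq_trans (subset_leq_card sub) _.
apply: leq_trans (cardsU_le _ _) _; apply: leq_add; exact: leq_imset_card.
Qed.

Lemma chi_stable (I : {set T}) : stable e I -> chi_on e I <= 1.
Proof.
move=> sI; pose g (z : T) := tt.
have pg : proper I g by move=> x y xI yI; move/stableP: sI => /(_ x y xI yI) /negbTE ->.
apply: leq_trans (chi_col pg) _; apply: leq_trans (max_card _) _; by rewrite card_unit.
Qed.

Lemma chi0 : chi_on e set0 = 0.
Proof.
have pg : proper set0 (fun z : T => tt) by move=> x y; rewrite inE.
by apply/eqP; rewrite -leqn0; apply: leq_trans (chi_col pg) _; rewrite imset0 cards0.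
Qed.

Lemma alpha_le_card (X : {set T}) : alpha_on e X <= #|X|.
Proof. by apply/bigmax_leqP => B /andP [sBX _]; exact: subset_leq_card. Qed.

Lemma set1_clique (x : T) : clique e [set x].
Proof. by apply/cliqueP => a b; rewrite !inE => /eqP -> /eqP ->; rewrite eqxx. Qed.

Lemma omega_ge1 (X : {set T}) : X != set0 -> 1 <= omega_on X.
Proof.
case/set0Pn => x xX; rewrite -(cards1 x); apply: omega_ge; last exact: set1_clique.
by rewrite sub1set.
Qed.

Lemma L2_step (X : {set T})
  (IH : forall Y : {set T}, #|Y| < #|X| ->
     4 * chi_on e Y <= 2 * omega_on Y + Delta_on Y + #|Y| + 1) :
  4 * chi_on e X + alpha_on e X <= 2 * omega_on X + Delta_on X + #|X| + 4.
Proof.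
have [->|Xn0] := eqVneq X set0.
  by rewrite chi0; have := alpha_le_card set0; rewrite cards0; lia.
have [I /andP [sIX sI] cI] := alpha_ex X.
set X' := X :\: I.
have eX : X = X' :|: I.
  apply/setP => z; rewrite !inE; case zI: (z \in I) => /=; rewrite ?andbT ?orbF //.
  by rewrite (subsetP sIX).
have hchi : chi_on e X <= chi_on e X' + 1.
  rewrite {1}eX; apply: leq_trans (chi_union _ _) _; by rewrite leq_add2l chi_stable.
have cX' : #|X'| = #|X| - #|I| by rewrite cardsDS.
have w1 := omega_ge1 Xn0.
have cIX : #|I| <= #|X| by exact: subset_leq_card.
have [X'0|X'n0] := eqVneq X' set0.
  rewrite X'0 chi0 in hchi; rewrite X'0 cards0 in cX'; lia.
have aI : 1 <= #|I|.
  case/set0Pn: Xn0 => x xX; rewrite cI -(cards1 x); apply: alpha_ge; first by rewrite sub1set.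
  by apply/stableP => a b; rewrite !inE => /eqP -> /eqP ->; rewrite e_irr.
have hw : omega_on X' <= omega_on X by apply: omega_mono; rewrite subsetDl.
have hD : Delta_on X' + 1 <= Delta_on X.
  have [x x'X dx] := Delta_ex X'n0.
  have xX : x \in X by move: x'X; rewrite inE => /andP [].
  have xnI : x \notin I by move: x'X; rewrite inE => /andP [].
  have /exists_inP [z zI exz] : [exists z in I, e x z].
    apply: contraR (xnI); rewrite negb_exists_in => /forall_inP H.
    have: #|x |: I| <= alpha_on e X.
      apply: alpha_ge; first by rewrite subUset sub1set xX sIX.
      apply/stableP => a b; rewrite !inE => /orP [/eqP ->|aI0] /orP [/eqP ->|bI0].
      - by rewrite e_irr.
      - exact: H.
      - by rewrite e_sym; exact: H.
      - by move/stableP: sI; apply.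
    by rewrite cardsU1 -cI; case: (x \in I) => //; rewrite ltnn.
  rewrite -dx addn1; apply: leq_trans (Delta_ge xX); apply: proper_card.
  rewrite properE; apply/andP; split.
    apply/subsetP => y; rewrite !inE => /andP [/andP [_ ->] ->]; by [].
  apply/subsetPn; exists z; first by rewrite inE (subsetP sIX) // exz.
  by rewrite !inE zI.
have ltX : #|X'| < #|X| by lia.
have := IH _ ltX; lia.
Qed.


Lemma stable3 (X : {set T}) a b c : alpha_on e X <= 2 ->
  a \in X -> b \in X -> c \in X -> a != b -> a != c -> b != c ->
  ~~ e a b -> ~~ e a c -> ~~ e b c -> False.
Proof.
move=> aX aI bI cI nab nac nbc eab eac ebc.
have : #|c |: [set a; b]| <= alpha_on e X.
  apply: alpha_ge.
    by apply/subsetP => z; rewrite !inE => /orP [|/orP []] /eqP ->.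
  apply/stableP => x y; rewrite !inE => /orP [|/orP []] /eqP -> /orP [|/orP []] /eqP ->;
    rewrite ?e_irr // 1?e_sym //.
rewrite cardsU1 cards2 !inE negb_or nab eq_sym nac eq_sym nbc /=; lia.
Qed.

Definition Uf (X : {set T}) (f : T -> {set T}) :=
  [set x in X | [forall y in X, (f y == f x) ==> (y == x)]].

Lemma UfP' (X : {set T}) (f : T -> {set T}) u y : u \in Uf X f -> y \in X -> f y = f u -> y = u.
Proof. by rewrite inE => /andP [_ /forall_inP H] yX fyu; apply/eqP; move/implyP: (H y yX); apply; rewrite fyu. Qed.

Lemma inUf (X : {set T}) (f : T -> {set T}) u : u \in X -> (forall y, y \in X -> f y = f u -> y = u) -> u \in Uf X f.
Proof. move=> uX H; rewrite inE uX; apply/forall_inP => y yX; apply/implyP => /eqP fy; by rewrite (H y yX fy). Qed.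

Section Opt.
Variables (X : {set T}) (f : T -> {set T}).
Hypothesis aX : alpha_on e X <= 2.
Hypothesis pf : proper X f.
Hypothesis fopt : #|f @: X| = chi_on e X.

Local Notation Uff := (Uf X f).

Lemma noimp (g : T -> {set T}) c : proper X g -> c \in f @: X ->
  g @: X \subset (f @: X) :\ c -> False.
Proof.
move=> pg cf sub; have := chi_col pg; rewrite -fopt.
have := subset_leq_card sub; rewrite (cardsD1 c (f @: X)) cf; lia.
Qed.

Lemma UfP u y : u \in Uff -> y \in X -> f y = f u -> y = u.
Proof. exact: UfP'. Qed.

Lemma UfX u : u \in Uff -> u \in X.
Proof. by rewrite inE => /andP []. Qed.

Lemma notUf a b : a \in X -> b \in X -> a != b -> f a = f b -> a \notin Uff.
Proof. by move=> aX' bX nab fab; apply/negP => aU; move: nab; rewrite (UfP aU bX (esym fab)) eqxx. Qed.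

Lemma samecol x y : x \in X -> y \in X -> f x = f y -> ~~ e x y.
Proof. by move=> xX yX fxy; apply/negP => exy; move: (pf xX yX exy); rewrite fxy eqxx. Qed.

Lemma cls2 a b z : a \in X -> b \in X -> z \in X -> a != b -> f a = f b -> f z = f a ->
  z = a \/ z = b.
Proof.
move=> aX' bX zX nab fab fza.
case: (eqVneq z a) => [->|nza]; first by left.
case: (eqVneq z b) => [->|nzb]; first by right.
exfalso; apply: (stable3 aX aX' bX zX nab) => //; rewrite 1?eq_sym //.
- exact: samecol.
- by apply: samecol => //.
- by apply: samecol => //; rewrite -fab -fza.
Qed.

Lemma cliqueU x y : x \in Uff -> y \in Uff -> x != y -> e x y.
Proof.
move=> xU yU nxy; case: (boolP (e x y)) => // nexy; exfalso.
pose g z := if z == y then f x else f z.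
have xX := UfX xU; have yX := UfX yU.
apply: (@noimp g (f y)); first last.
- apply/subsetP => c /imsetP [z zX ->]; rewrite /g; case: ifP => [_|/negbT nzy].
    rewrite !inE imset_f // andbT; apply/eqP => fxy; move: nxy; by rewrite (UfP yU xX fxy) eqxx.
  rewrite !inE imset_f // andbT; apply/eqP => fzy; move: nzy; by rewrite (UfP yU zX fzy) eqxx.
- exact: imset_f.
move=> p q pX qX epq; rewrite /g.
case: ifP => [/eqP epy|/negbT npy]; case: ifP => [/eqP eqy|/negbT nqy].
- by move: epq; rewrite epy eqy e_irr.
- apply/eqP => fxq; move: epq; rewrite epy (UfP xU qX (esym fxq)) e_sym; by rewrite (negbTE nexy).
- apply/eqP => fpx; move: epq; rewrite eqy (UfP xU pX fpx); by rewrite (negbTE nexy).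
- exact: pf.
Qed.

Lemma F6 u w a b : u \in Uff -> w \in Uff -> u != w -> a \in X -> b \in X -> a != b ->
  f a = f b -> ~~ e u a -> e b w.
Proof.
move=> uU wU nuw aX' bX nab fab neua; case: (boolP (e b w)) => // nebw; exfalso.
have uX := UfX uU; have wX := UfX wU.
have nau : a != u.
  by apply/eqP => eau; rewrite eau in fab nab; move: nab; rewrite (UfP uU bX (esym fab)) eqxx.
have nbu : b != u.
  by apply/eqP => ebu; rewrite ebu in fab nab; move: nab; rewrite (UfP uU aX' fab) eqxx.
have nbw : b != w.
  by apply/eqP => ebw; rewrite ebw in fab nab; move: nab; rewrite (UfP wU aX' fab) eqxx.
have naw : a != w.
  by apply/eqP => eaw; rewrite eaw in fab nab; move: nab; rewrite (UfP wU bX (esym fab)) eqxx.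
pose g z := if z == u then f a else if z == b then f w else f z.
apply: (@noimp g (f u)); first last.
- apply/subsetP => c /imsetP [z zX ->]; rewrite /g.
  case: ifP => [_|/negbT nzu].
    rewrite !inE imset_f // andbT; apply/eqP => fau; by move: nau; rewrite (UfP uU aX' fau) eqxx.
  case: ifP => [_|_].
    rewrite !inE imset_f // andbT; apply/eqP => fwu; by move: nuw; rewrite (UfP uU wX fwu) eqxx.
  rewrite !inE imset_f // andbT; apply/eqP => fzu; by move: nzu; rewrite (UfP uU zX fzu) eqxx.
- exact: imset_f.
move=> p q pX qX epq; rewrite /g.
case: ifP => [/eqP epu|/negbT npu].
- case: ifP => [/eqP equ|/negbT nqu].
  + by move: epq; rewrite epu equ e_irr.
  + case: ifP => [/eqP eqb|/negbT nqb]; apply/eqP => gpq.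
    * by move: naw; rewrite (UfP wU aX' gpq) eqxx.
    * have [qa|qb] := cls2 aX' bX qX nab fab (esym gpq).
        by move: epq; rewrite epu qa (negbTE neua).
      by move: nqb; rewrite qb eqxx.
- case: ifP => [/eqP epb|/negbT npb].
  + case: ifP => [/eqP equ|/negbT nqu].
    * apply/eqP => gpq; by move: naw; rewrite (UfP wU aX' (esym gpq)) eqxx.
    * case: ifP => [/eqP eqb|/negbT nqb]; apply/eqP => gpq.
      - by move: epq; rewrite epb eqb e_irr.
      - by move: epq; rewrite epb (UfP wU qX (esym gpq)) (negbTE nebw).
  + case: ifP => [/eqP equ|/negbT nqu].
    * apply/eqP => gpq; have [pa|pb] := cls2 aX' bX pX nab fab gpq.
        by move: epq; rewrite equ pa e_sym (negbTE neua).
      by move: npb; rewrite pb eqxx.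
    * case: ifP => [/eqP eqb|/negbT nqb]; apply/eqP => gpq.
      - by move: epq; rewrite eqb (UfP wU pX gpq) e_sym (negbTE nebw).
      - by move: (pf pX qX epq); rewrite gpq eqxx.
Qed.

Definition swapf u a' b' z := if z == u then f a' else if z == b' then f u else f z.

Lemma swapP u a' b' : u \in Uff -> a' \in X -> b' \in X -> a' != b' -> f a' = f b' -> ~~ e u a' ->
  [/\ proper X (swapf u a' b'), #|swapf u a' b' @: X| = chi_on e X, b' \in Uf X (swapf u a' b'),
     (forall w, w \in Uff -> w != u -> w \in Uf X (swapf u a' b')) &
     (forall z, z != u -> z != b' -> swapf u a' b' z = f z)].
Proof.
move=> uU aX' bX nab fab neua.
have uX := UfX uU.
have nau : a' != u.
  by apply/eqP => eau; rewrite eau in fab nab; move: nab; rewrite (UfP uU bX (esym fab)) eqxx.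
have nbu : b' != u.
  by apply/eqP => ebu; rewrite ebu in fab nab; move: nab; rewrite (UfP uU aX' fab) eqxx.
have pg : proper X (swapf u a' b').
  move=> p q pX qX epq; rewrite /swapf.
  case: ifP => [/eqP epu|/negbT npu].
  - case: ifP => [/eqP equ|/negbT nqu].
    + by move: epq; rewrite epu equ e_irr.
    + case: ifP => [/eqP eqb|/negbT nqb]; apply/eqP => gpq.
      * by move: nau; rewrite (UfP uU aX' gpq) eqxx.
      * have [qa|qb] := cls2 aX' bX qX nab fab (esym gpq).
          by move: epq; rewrite epu qa (negbTE neua).
        by move: nqb; rewrite qb eqxx.
  - case: ifP => [/eqP epb|/negbT npb].
    + case: ifP => [/eqP equ|/negbT nqu].
      * apply/eqP => gpq; by move: nau; rewrite (UfP uU aX' (esym gpq)) eqxx.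
      * case: ifP => [/eqP eqb|/negbT nqb]; apply/eqP => gpq.
        - by move: epq; rewrite epb eqb e_irr.
        - by move: nqu; rewrite (UfP uU qX (esym gpq)) eqxx.
    + case: ifP => [/eqP equ|/negbT nqu].
      * apply/eqP => gpq; have [pa|pb] := cls2 aX' bX pX nab fab gpq.
          by move: epq; rewrite equ pa e_sym (negbTE neua).
        by move: npb; rewrite pb eqxx.
      * case: ifP => [/eqP eqb|/negbT nqb]; apply/eqP => gpq.
        - by move: npu; rewrite (UfP uU pX gpq) eqxx.
        - by move: (pf pX qX epq); rewrite gpq eqxx.
split => //.
- apply/eqP; rewrite eqn_leq chi_col // andbT -fopt; apply: subset_leq_card.
  apply/subsetP => c /imsetP [z zX ->]; rewrite /swapf.
  by case: ifP => _; [|case: ifP => _]; apply: imset_f.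
- apply: inUf => // y yX; rewrite /swapf (negbTE nbu) eqxx.
  case: ifP => [/eqP eyu|/negbT nyu].
    by move=> fau; move: nau; rewrite (UfP uU aX' fau) eqxx.
  case: ifP => [/eqP -> //|_] fyu.
  by move: nyu; rewrite (UfP uU yX fyu) eqxx.
- move=> w wU nwu; have wX := UfX wU.
  have nwb : w != b'.
    apply/eqP => ewb; move: wU; rewrite ewb.
    by rewrite (negbTE (notUf bX aX' _ (esym fab))) // eq_sym.
  apply: inUf => // y yX; rewrite /swapf (negbTE nwu) (negbTE nwb).
  case: ifP => [/eqP eyu|/negbT nyu].
    move=> faw; have eaw := UfP wU aX' faw; rewrite eaw in fab.
    by move: nwb; rewrite (UfP wU bX (esym fab)) eqxx.
  case: ifP => [/eqP eyb|/negbT nyb] fyw.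
    by move: nwu; rewrite (UfP wU uX fyw) eqxx.
  exact: UfP wU yX fyw.
- by move=> z nzu nzb; rewrite /swapf (negbTE nzu) (negbTE nzb).
Qed.

End Opt.


Lemma count_col (X : {set T}) (f : T -> {set T}) : 2 * #|f @: X| <= #|X| + #|Uf X f|.
Proof.
have -> : #|X| + #|Uf X f| = \sum_(x in X) (1 + (x \in Uf X f)).
  rewrite big_split /= sum1_card; congr (_ + _).
  rewrite (eq_bigr (fun x => if x \in Uf X f then 1 else 0)); last by move=> x _; case: (x \in _).
  rewrite -big_mkcondr /= -sum1_card; apply: eq_bigl => x /=.
  by case xU: (x \in Uf X f); rewrite ?andbT ?andbF // (UfX xU).
rewrite (partition_big_imset f) /= mulnC -sum_nat_const; apply: leq_sum => c /imsetP [x0 x0X ->].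
rewrite (bigD1 x0) /=; last by rewrite x0X eqxx.
case x0U: (x0 \in Uf X f); first by lia.
have : ~~ [forall y in X, (f y == f x0) ==> (y == x0)].
  by apply: contraFN x0U => H; rewrite inE x0X.
rewrite negb_forall_in => /exists_inP [y yX]; rewrite negb_imply => /andP [fy nyx].
rewrite (bigD1 y) /=; last by rewrite yX fy nyx.
by lia.
Qed.

Lemma split_card (X : {set T}) v : v \in X ->
  #|X| <= 1 + #|[set y in X | e v y]| + #|[set y in X | (y != v) && ~~ e v y]|.
Proof.
move=> vX.
have sub : X \subset (v |: [set y in X | e v y]) :|: [set y in X | (y != v) && ~~ e v y].
  apply/subsetP => y yX; rewrite !inE yX /=.
  by case: (eqVneq y v) => //= _; case: (e v y).
apply: leq_trans (subset_leq_card sub) _.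
apply: leq_trans (cardsU_le _ _) _; rewrite leq_add2r.
by apply: leq_trans (cardsU_le _ _) _; rewrite cards1.
Qed.

Lemma Cclique (X : {set T}) v : alpha_on e X <= 2 -> v \in X ->
  clique e [set y in X | (y != v) && ~~ e v y].
Proof.
move=> aX vX; apply/cliqueP => a b; rewrite !inE => /and3P [aX' nav neva] /and3P [bX nbv nevb] nab.
case: (boolP (e a b)) => // neab; exfalso.
apply: (stable3 aX vX aX' bX) => //; by rewrite eq_sym.
Qed.

Lemma disj_card (A B : {set T}) : (forall x, x \in A -> x \notin B) -> #|A :|: B| = #|A| + #|B|.
Proof.
move=> H; rewrite -cardsUI; suff -> : A :&: B = set0 by rewrite cards0 addn0.
by apply/setP => x; rewrite !inE; case xA: (x \in A) => //=; rewrite (negbTE (H x xA)).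
Qed.

Section Base.
Variables (X : {set T}) (f : T -> {set T}).
Hypothesis aX : alpha_on e X <= 2.
Hypothesis pf : proper X f.
Hypothesis fopt : #|f @: X| = chi_on e X.
Variable u : T.
Hypothesis uU : u \in Uf X f.
Local Notation U := (Uf X f).

Definition Cu := [set y in X | (y != u) && ~~ e u y].
Definition C1 := [set a in Cu | [forall w in U, (w != u) ==> e a w]].
Definition C2 := Cu :\: C1.
Definition pt a := odflt a [pick b in X | (b != a) && (f b == f a)].

Lemma uX : u \in X. Proof. exact: UfX uU. Qed.

Lemma ptP a : a \in X -> a \notin U -> [/\ pt a \in X, pt a != a & f (pt a) = f a].
Proof.
move=> aX' naU; rewrite /pt; case: pickP => [b /and3P [bX nba /eqP fba] | H] //=.
exfalso; move: naU; rewrite inE aX' /=; apply/negP/negPn/forall_inP => y yX.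
by apply/implyP => fy; move: (H y); rewrite yX fy andbT /= => /negbT; rewrite negbK.
Qed.

Lemma CuP a : a \in Cu -> [/\ a \in X, a != u, ~~ e u a & a \notin U].
Proof.
rewrite inE => /and3P [aX' nau neua]; split => //.
apply/negP => aU; move: neua; by rewrite (cliqueU aX pf fopt uU aU) // eq_sym.
Qed.

Lemma CuC a a' : a \in Cu -> a' \in Cu -> a != a' -> e a a'.
Proof. by move=> aC a'C; move/cliqueP: (Cclique aX uX); apply. Qed.

Lemma pt_facts a : a \in Cu ->
  [/\ pt a \in X, pt a != a, f (pt a) = f a, pt a != u & pt a \notin U].
Proof.
case/CuP => aX' nau neua naU; have [pX npa fpa] := ptP aX' naU.
have npu : pt a != u.
  by apply/eqP => epu; move: fpa; rewrite epu => /esym fau; move: nau; rewrite (UfP uU aX' fau) eqxx.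
split => //; exact: (notUf pX aX' npa fpa).
Qed.

Lemma pt_u a : a \in Cu -> e u (pt a).
Proof.
move=> aC; have [aX' nau neua naU] := CuP aC; have [pX npa fpa npu pnU] := pt_facts aC.
case: (boolP (e u (pt a))) => // neup; exfalso.
apply: (stable3 aX uX aX' pX) => //; rewrite 1?eq_sym //.
exact: (samecol pf aX' pX (esym fpa)).
Qed.

Lemma pt_w a w : a \in Cu -> w \in U -> w != u -> e (pt a) w.
Proof.
move=> aC wU nwu; have [aX' nau neua naU] := CuP aC; have [pX npa fpa npu pnU] := pt_facts aC.
apply: (F6 aX pf fopt uU wU _ aX' pX) => //; by rewrite eq_sym.
Qed.

Lemma pt_inj a a' : a \in Cu -> a' \in Cu -> pt a = pt a' -> a = a'.
Proof.
move=> aC a'C epp; have [_ _ fpa _ _] := pt_facts aC; have [_ _ fpa' _ _] := pt_facts a'C.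
case: (eqVneq a a') => // naa'; exfalso.
have [aX' _ _ _] := CuP aC; have [a'X _ _ _] := CuP a'C.
by move: (pf aX' a'X (CuC aC a'C naa')); rewrite -fpa -fpa' epp eqxx.
Qed.

Lemma F7 a a' : a \in C2 -> a' \in Cu -> pt a != pt a' -> e (pt a) (pt a').
Proof.
move=> aC2 a'C npp.
have aC : a \in Cu by move: aC2; rewrite inE => /andP [].
have naC1 : a \notin C1 by move: aC2; rewrite inE => /andP [].
have [aX' nau neua naU] := CuP aC; have [pX npa fpa npu pnU] := pt_facts aC.
have [a'X na'u neua' na'U] := CuP a'C; have [p'X np'a' fpa' np'u p'nU] := pt_facts a'C.
have /exists_inP [w wU] : [exists w in U, (w != u) && ~~ e a w].
  apply: contraR naC1; rewrite negb_exists_in => /forall_inP H; rewrite inE aC /=.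
  apply/forall_inP => w wU; apply/implyP => nwu; have := H w wU; by rewrite nwu /= negbK.
case/andP => nwu neaw.
case: (boolP (e (pt a) (pt a'))) => // nepp; exfalso.
have na'p : a' != pt a' by rewrite eq_sym.
have [pg cg b'U2 wU2 same] := swapP aX pf fopt uU a'X p'X na'p (esym fpa') neua'.
have naa' : a != a' by apply: contraNneq npp => ->.
have nab' : a != pt a'.
  apply/eqP => eab; rewrite -eab in fpa'.
  by move: (pf aX' a'X (CuC aC a'C naa')); rewrite fpa' eqxx.
have f2a := same a nau nab'.
have f2p := same (pt a) npu npp.
have wU2' := wU2 w wU nwu.
have nb'w : pt a' != w by apply: contraNneq p'nU => ->.
have fe : swapf f u a' (pt a') (pt a) = swapf f u a' (pt a') a by rewrite f2p f2a fpa.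
have nepp' : ~~ e (pt a') (pt a) by rewrite e_sym.
have := F6 aX pg cg b'U2 wU2' nb'w pX aX' npa fe nepp'.
by rewrite (negbTE neaw).
Qed.

Lemma C1sub : C1 \subset Cu.
Proof. by apply/subsetP => a; rewrite inE => /andP []. Qed.

Lemma CuX : Cu \subset X.
Proof. by apply/subsetP => a /CuP []. Qed.

Lemma UX : U \subset X.
Proof. by apply/subsetP => a /UfX. Qed.

Lemma C1P a : a \in C1 -> a \in Cu /\ (forall w, w \in U -> w != u -> e a w).
Proof.
rewrite inE => /andP [aC /forall_inP H]; split => // w wU nwu.
by move/implyP: (H w wU); apply.
Qed.

Lemma clique1 : omega_on X >= #|U| - 1 + #|C1|.
Proof.
have -> : #|U| - 1 = #|U :\ u| by rewrite (cardsD1 u U) uU add1n subn1.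
rewrite -disj_card; last first.
  move=> x /setD1P [_ xU]; apply/negP => xC1.
  by have [_ _ _ /negP] := CuP (subsetP C1sub x xC1).
apply: omega_ge.
  by rewrite subUset (subset_trans (subsetDl _ _) UX) (subset_trans C1sub CuX).
apply/cliqueP => x y; rewrite !in_setU => /orP [/setD1P [nxu xU]|xC1]
  /orP [/setD1P [nyu yU]|yC1] nxy.
- exact: (cliqueU aX pf fopt xU yU nxy).
- by rewrite e_sym; have [_ H] := C1P yC1; exact: H.
- by have [_ H] := C1P xC1; exact: H.
- by apply: CuC => //; apply: (subsetP C1sub).
Qed.

Lemma clique2 (D : {set T}) : D \subset Cu ->
  (forall a a', a \in D -> a' \in D -> a != a' -> (a \in C2) || (a' \in C2)) ->
  omega_on X >= #|U| + #|D|.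
Proof.
move=> sD HD.
have -> : #|D| = #|pt @: D|.
  by rewrite card_in_imset // => a a' aD a'D; apply: pt_inj; apply: (subsetP sD).
rewrite -disj_card; last first.
  move=> x xU; apply/negP => /imsetP [a aD exa].
  have [_ _ _ _ /negP] := pt_facts (subsetP sD a aD); by rewrite -exa.
apply: omega_ge.
  rewrite subUset UX /=; apply/subsetP => x /imsetP [a aD ->].
  by have [] := pt_facts (subsetP sD a aD).
have ptU a x : a \in D -> x \in U -> e (pt a) x.
  move=> aD xU; have aC := subsetP sD a aD.
  case: (eqVneq x u) => [->|nxu]; first by rewrite e_sym pt_u.
  exact: pt_w.
apply/cliqueP => x y; rewrite !in_setU => /orP [xU|/imsetP [a aD ->]] /orP [yU|/imsetP [a' a'D ->]] nxy.
- exact: (cliqueU aX pf fopt xU yU nxy).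
- by rewrite e_sym ptU.
- by rewrite ptU.
- have naa : a != a' by apply: contraNneq nxy => ->.
  have a'C := subsetP sD a' a'D; have aC := subsetP sD a aD.
  case/orP: (HD a a' aD a'D naa) => [aC2|a'C2]; first exact: F7.
  by rewrite e_sym; apply: F7 => //; rewrite eq_sym.
Qed.

Lemma base_u : 2 * #|U| + #|Cu| <= 2 * omega_on X.
Proof.
have U1 : 1 <= #|U| by apply/card_gt0P; exists u.
have eC : #|Cu| = #|C1| + #|C2| by rewrite /C2 cardsDS ?C1sub // subnKC // subset_leq_card // C1sub.
have c1 := clique1.
have C2sub : C2 \subset Cu by apply: subsetDl.
case: (pickP (mem C1)) => [a0 a0C1|noC1].
- have := @clique2 (C2 :|: [set a0]).
  rewrite disj_card; last by move=> x xC2; rewrite in_set1; apply: contraTneq xC2 => ->; rewrite in_setD (_ : a0 \in C1 = true).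
  rewrite cards1 => c2.
  have : omega_on X >= #|U| + (#|C2| + 1).
    apply: c2.
      by rewrite subUset C2sub sub1set (subsetP C1sub).
    move=> a a'; rewrite !inE => /orP [->//|/eqP ->] /orP [->|/eqP ->]; rewrite ?orbT //.
    by rewrite eqxx.
  lia.
- have C10 : #|C1| = 0 by apply: eq_card0.
  have := @clique2 C2 C2sub (fun a a0 aC _ _ => ltac:(by rewrite aC)).
  lia.
Qed.

End Base.


Lemma base_ineq (X : {set T}) : alpha_on e X <= 2 ->
  4 * chi_on e X <= 2 * omega_on X + Delta_on X + #|X| + 1.
Proof.
move=> aX; have [f pf fopt] := chi_ex X.
have cnt := count_col X f; rewrite fopt in cnt.
have [U0|/set0Pn [u uU]] := eqVneq (Uf X f) set0.
  rewrite U0 cards0 in cnt.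
  have [X0|/set0Pn [v vX]] := eqVneq X set0.
    by rewrite X0 cards0 in cnt *; lia.
  have := split_card vX; have := Delta_ge vX.
  have sC : [set y in X | (y != v) && ~~ e v y] \subset X.
    by apply/subsetP => y; rewrite inE => /andP [].
  have := omega_ge sC (Cclique aX vX).
  lia.
have uX := UfX uU.
have := split_card uX; have := Delta_ge uX; have := base_u aX pf fopt uU.
rewrite /Cu; lia.
Qed.

Lemma L1 (X : {set T}) : 4 * chi_on e X <= 2 * omega_on X + Delta_on X + #|X| + 1.
Proof.
have H : forall n (Y : {set T}), #|Y| <= n ->
    4 * chi_on e Y <= 2 * omega_on Y + Delta_on Y + #|Y| + 1.
  elim=> [|n IH] Y hY.
    have -> : Y = set0 by apply: cards0_eq; lia.
    by rewrite chi0.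
  case: (leqP (alpha_on e Y) 2) => [a2|a3]; first exact: base_ineq.
  have IH' : forall Z : {set T}, #|Z| < #|Y| ->
      4 * chi_on e Z <= 2 * omega_on Z + Delta_on Z + #|Z| + 1.
    by move=> Z hZ; apply: IH; lia.
  have := L2_step IH'.
  lia.
exact: (H #|X|).
Qed.

Lemma L2 (X : {set T}) : 4 * chi_on e X + alpha_on e X <= 2 * omega_on X + Delta_on X + #|X| + 4.
Proof. by apply: L2_step => Y _; exact: L1. Qed.


Lemma omega_ex (X : {set T}) : exists2 Q : {set T}, (Q \subset X) && clique e Q & #|Q| = omega_on X.
Proof.
rewrite /omega_on.
have : 0 < #|[pred B : {set T} | (B \subset X) && clique e B]|.
  apply/card_gt0P; exists set0; rewrite inE sub0set /=; apply/cliqueP => x y; by rewrite inE.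
move/(eq_bigmax_cond (fun B : {set T} => #|B|)) => [B HB ->]; by exists B.
Qed.

Lemma omegaT : omega e = omega_on setT.
Proof. by rewrite /omega /omega_on; apply: eq_bigl => B; rewrite subsetT. Qed.

Lemma DeltaT : Delta e = Delta_on setT.
Proof.
rewrite /Delta /Delta_on; apply: eq_big => x; first by rewrite in_setT.
by move=> _; apply: eq_card => y; rewrite !inE.
Qed.

Lemma main_nat (K : {set T}) : compl_cutset e K ->
  4 * chi e + alpha e <= 2 * omega e + 2 * Delta e + 5 + 4 * chi_on e K + alpha_on e K.
Proof.
case=> u [v [uK vK nc]].
set R := [rel x y | [&& x \notin K, y \notin K & compl_rel e x y]] in nc.
set A := [set x | (x \notin K) && connect R u x].
set B := [set x | (x \notin K) && ~~ connect R u x].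
have uA : u \in A by rewrite inE uK connect0.
have vB : v \in B by rewrite inE vK nc.
have jn : forall a b, a \in A -> b \in B -> e a b.
  move=> a b; rewrite !inE => /andP [aK cua] /andP [bK ncb].
  case: (boolP (e a b)) => // neab; exfalso.
  have nab : a != b by apply: contraNneq ncb => <-.
  move/negP: ncb; apply.
  by apply: connect_trans cua (connect1 _); rewrite /= aK bK /compl_rel /= neab nab.
have dAB : forall x, x \in A -> x \notin B by move=> x; rewrite !inE => /andP [-> ->].
have dKA : forall x, x \in K -> x \notin A by move=> x xK; rewrite inE xK.
have dKB : forall x, x \in K -> x \notin B by move=> x xK; rewrite inE xK.
have eT : setT = K :|: A :|: B :> {set T}.
  apply/setP => x; rewrite !inE; by case: (x \in K); case: (connect R u x).
have hchi : chi e <= chi_on e K + chi_on e A + chi_on e B.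
  rewrite /chi eT; apply: leq_trans (chi_union _ _) _; rewrite leq_add2r; exact: chi_union.
have homega : omega_on A + omega_on B <= omega e.
  have [QA /andP [sA cA] <-] := omega_ex A; have [QB /andP [sB cB] <-] := omega_ex B.
  rewrite -disj_card; last first.
    by move=> x xQA; apply/negP => /(subsetP sB) xB; move: (dAB x (subsetP sA x xQA)); rewrite xB.
  rewrite omegaT; apply: omega_ge; first exact: subsetT.
  apply/cliqueP => x y; rewrite !in_setU => /orP [xA|xB] /orP [yA|yB] nxy.
  - by move/cliqueP: cA; apply.
  - by apply: jn; [apply: (subsetP sA) | apply: (subsetP sB)].
  - by rewrite e_sym; apply: jn; [apply: (subsetP sA) | apply: (subsetP sB)].
  - by move/cliqueP: cB; apply.
have hD : forall (P Q : {set T}), (forall a b, a \in P -> b \in Q -> e a b) ->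
    (forall x, x \in P -> x \notin Q) -> P != set0 -> Delta_on P + #|Q| <= Delta e.
  move=> P Q jPQ dPQ Pn0; have [x xP <-] := Delta_ex Pn0.
  rewrite -disj_card; last by move=> y; rewrite inE => /andP [yP _]; exact: dPQ.
  rewrite DeltaT; apply: leq_trans (Delta_ge (in_setT x)); apply: subset_leq_card.
  apply/subsetP => y; rewrite !inE => /orP [/andP [_ ->] //|yQ]; exact: jPQ.
have An0 : A != set0 by apply/set0Pn; exists u.
have Bn0 : B != set0 by apply/set0Pn; exists v.
have dBA : forall x, x \in B -> x \notin A by move=> x; rewrite !inE => /andP [-> ->].
have jnBA : forall a b, a \in B -> b \in A -> e a b by move=> a b aB bA; rewrite e_sym; exact: jn.
have hDA := hD A B jn dAB An0.
have hDB := hD B A jnBA dBA Bn0.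
have stsub : forall S I : {set T}, S \subset I -> stable e I -> stable e S.
  move=> S I sSI /stableP sI; apply/stableP => x y xS yS; apply: sI; exact: (subsetP sSI).
have halpha : alpha e <= alpha_on e K + maxn (alpha_on e A) (alpha_on e B).
  rewrite /alpha; have [I /andP [_ sI] <-] := alpha_ex setT.
  rewrite -(cardsID K I); apply: leq_add.
    by apply: alpha_ge; [apply: subsetIr | apply: stsub sI; apply: subsetIl].
  case: (boolP [exists a in I :\: K, a \in A]) => [/exists_inP [a aIK aA]|/exists_inP noA].
    apply: leq_trans (leq_maxl _ _); apply: alpha_ge; last by apply: stsub sI; apply: subsetDl.
    apply/subsetP => x xIK; move: (xIK); rewrite in_setD => /andP [xK xI].
    case xA : (x \in A) => //.
    have xB : x \in B by rewrite inE xK /=; move: xA; rewrite inE xK /= => ->.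
    move: (jn a x aA xB); move: aIK; rewrite in_setD => /andP [_ aI].
    by move/stableP: sI => /(_ a x aI xI) /negbTE ->.
  apply: leq_trans (leq_maxr _ _); apply: alpha_ge; last by apply: stsub sI; apply: subsetDl.
  apply/subsetP => x xIK; move: (xIK); rewrite in_setD => /andP [xK xI].
  rewrite inE xK /=; apply/negP => cx; apply: noA; exists x => //; by rewrite inE xK.
case: (leqP (alpha_on e A) (alpha_on e B)) => hab.
  have l1 := L1 A; have l2 := L2 B; rewrite (maxn_idPr hab) in halpha; lia.
have l1 := L1 B; have l2 := L2 A; rewrite (maxn_idPl (ltnW hab)) in halpha; lia.
Qed.

End G.

From mathcomp Require Import lra.
Import GRing.Theory Num.Theory.
Local Open Scope ring_scope.

Theorem corollary6 (T : finType) (e : rel T)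
  (e_sym : symmetric e) (e_irr : irreflexive e) (T_ne : (0 < #|T|)%N)
  (K : {set T}) (hK : compl_cutset e K) :
  (chi e)%:R <= (1/2 : rat) * ((omega e)%:R + (Delta e)%:R + 1)
     + (4 * (chi_on e K)%:R + (alpha_on e K)%:R + 3 - (alpha e)%:R) / 4.
Proof.
have H := main_nat e_sym e_irr hK.
have H' : ((4 * chi e + alpha e)%N%:R <= (2 * omega e + 2 * Delta e + 5 + 4 * chi_on e K + alpha_on e K)%N%:R :> rat).
  by rewrite ler_nat.
rewrite !natrD in H'.
lra.
Qed.
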